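(* Let $n \geq 0$ and $k \geq 1$ be integers and let $p=(p_1,p_2)$ be a probability distribution on two bins. Let $M_n$ be the maximum load of the two bins when $n$ balls are thrown independently, each landing in bin $i$ with probability $p_i$. Let $p' = (1-\|p\|_k,\ \|p\|_k)$, where $\|p\|_k = (p_1^k+p_2^k)^{1/k}$, and let $M'_n$ be the load of bin $2$ when $n$ balls are thrown independently according to $p'$. Then $\Pr[M_n \geq k] \geq \Pr[M'_n \geq k]$.
   Context: The load of a bin is the number of balls that landed in it. *)

(* Defs.v *)
From HB Require Import structures.
From mathcomp Require Import all_boot all_order all_algebra.
From mathcomp Require Import reals exp.
Set Implicit Arguments. Unset Strict Implicit. Unset Printing Implicit Defensive.
Import Order.TTheory GRing.Theory Num.Theory.
Local Open Scope ring_scope.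

(* Bins are 'I_2: bin 1 is ord0, bin 2 is ord_max (value 1). *)
Definition dist2 {R : realType} (a b : R) : 'I_2 -> R :=
  fun i => if val i == 0%N then a else b.

(* An outcome of throwing n balls: ball j lands in bin f j. Balls are
   independent, so its probability is the product of the bin probabilities. *)
Definition outcome_prob {R : realType} (n : nat) (q : 'I_2 -> R)
  (f : {ffun 'I_n -> 'I_2}) : R := \prod_(j < n) q (f j).

Definition load (n : nat) (f : {ffun 'I_n -> 'I_2}) (b : 'I_2) : nat :=
  #|[set j | f j == b]|.

Definition max_load (n : nat) (f : {ffun 'I_n -> 'I_2}) : nat :=
  maxn (load f ord0) (load f ord_max).

Definition Pr_maxload_ge {R : realType} (n : nat) (q : 'I_2 -> R) (k : nat) : R :=
  \sum_(f : {ffun 'I_n -> 'I_2} | (k <= max_load f)%N) outcome_prob q f.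

Definition Pr_load2_ge {R : realType} (n : nat) (q : 'I_2 -> R) (k : nat) : R :=
  \sum_(f : {ffun 'I_n -> 'I_2} | (k <= load f ord_max)%N) outcome_prob q f.

Definition knorm {R : realType} (k : nat) (p1 p2 : R) : R :=
  powR (p1 ^+ k + p2 ^+ k) (k%:R)^-1.

(* Main.v *)
Require Import Defs.
From HB Require Import structures.
From mathcomp Require Import all_boot all_order all_algebra.
From mathcomp Require Import reals exp.
Import Order.TTheory GRing.Theory Num.Theory.
Local Open Scope ring_scope.
From mathcomp Require Import ring lra zify.

Lemma I2_cases (i : 'I_2) : i = ord0 \/ i = ord_max.
Proof. case: i => [[|[|m]] H]; [left|right|by []]; exact: val_inj. Qed.

Lemma subn_of_add x y m : (x + y)%N = m -> y = (m - x)%N.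
Proof. by move=> <-; rewrite addKn. Qed.

Lemma cardlt n (A : {set 'I_n}) : (#|A| < n.+1)%N.
Proof. by rewrite ltnS; apply: leq_trans (max_card _) _; rewrite card_ord. Qed.

Section L.
Variable R : realType.
Variable n : nat.

Definition tofun (A : {set 'I_n}) : {ffun 'I_n -> 'I_2} :=
  [ffun i => if i \in A then ord_max else ord0].

Lemma load_tofun A : load (tofun A) ord_max = #|A|.
Proof. by rewrite /load; apply: eq_card => i; rewrite inE ffunE; case: (i \in A). Qed.

Lemma load0 (f : {ffun 'I_n -> 'I_2}) : load f ord0 = (n - load f ord_max)%N.
Proof.
rewrite /load.
have -> : [set j | f j == ord0] = ~: [set j | f j == ord_max] :> {set 'I_n}.
  apply/setP => j; rewrite !inE; by case: (I2_cases (f j)) => ->.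
by have := cardsC [set j | f j == ord_max]; rewrite card_ord => /subn_of_add <-.
Qed.

Lemma prob_tofun (a b : R) A :
  outcome_prob (dist2 a b) (tofun A) = b ^+ #|A| * a ^+ (n - #|A|).
Proof.
rewrite /outcome_prob (bigID (mem A)) /=.
rewrite (eq_bigr (fun _ => b)); last by move=> i HA; rewrite ffunE HA.
rewrite [X in _ * X](eq_bigr (fun _ => a)); last by move=> i HA; rewrite ffunE (negbTE HA).
rewrite !prodr_const; congr (_ * _ ^+ _).
have := cardsC A; rewrite card_ord => /subn_of_add <-.
by apply: eq_card => i; rewrite !inE.
Qed.

Lemma sum_load (a b : R) (P : pred nat) :
  \sum_(f : {ffun 'I_n -> 'I_2} | P (load f ord_max)) outcome_prob (dist2 a b) f
  = \sum_(j < n.+1 | P j) 'C(n, j)%:R * b ^+ j * a ^+ (n - j).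
Proof.
rewrite (reindex tofun); last first.
  exists (fun f : {ffun 'I_n -> 'I_2} => [set i | f i == ord_max]) => [A _|f _].
    by apply/setP => i; rewrite inE ffunE; case: (i \in A).
  apply/ffunP => i; rewrite ffunE inE.
  by case: (I2_cases (f i)) => ->.
under eq_bigl => A do rewrite load_tofun.
under eq_bigr => A _ do rewrite prob_tofun.
rewrite (partition_big (fun A : {set 'I_n} => (inord #|A| : 'I_n.+1)) (fun j : 'I_n.+1 => P j)); last first.
  move=> A HA; rewrite inordK //; exact: cardlt.
apply: eq_bigr => j Pj.
rewrite (eq_bigl (fun A => A \in [set A : {set 'I_n} | #|A| == j])); last first.
  move=> A; rewrite inE.
  have HA := cardlt _ A.
  apply/idP/idP.
    by case/andP => _ /eqP <-; rewrite inordK.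
  move/eqP => HAj; rewrite HAj Pj /=; apply/eqP/val_inj; by rewrite /= inordK // HAj.
rewrite (eq_bigr (fun _ => b ^+ j * a ^+ (n - j))); last first.
  by move=> A; rewrite inE => /eqP ->.
by rewrite sumr_const card_draws card_ord -mulrA mulr_natl.
Qed.
End L.
Section Tail.
Variable R : realFieldType.
Variable k : nat.
Hypothesis hk : (1 <= k)%N.

Definition F (x : R) n j := if (k <= j)%N then 'C(n,j)%:R * x ^+ j * (1-x) ^+ (n-j) else 0.
Definition T x n := \sum_(0 <= j < n.+1) F x n j.
Definition Gf (x : R) j := if (k <= j)%N then 'C(j.-1,k.-1)%:R * (1-x) ^+ (j-k) else 0.
Definition G x n := \sum_(0 <= j < n.+1) Gf x j.

Lemma Fstep x n j : F x n.+1 j.+1 = (1-x) * F x n j.+1 + x * F x n j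
   + (if j.+1 == k then 'C(n,j)%:R * x ^+ j.+1 * (1-x) ^+ (n-j) else 0).
Proof.
rewrite /F.
case: (leqP k j.+1) => hkj; last first.
  have -> : (k <= j)%N = false by apply/negbTE; rewrite -ltnNge; lia.
  have -> : (j.+1 == k) = false by apply/negbTE; lia.
  by rewrite !mulr0 !addr0.
rewrite binS natrD subSS.
have [ltjn | lenj] := ltnP j n.
  have -> : (n - j = (n - j.+1).+1)%N by lia.
  case: (leqP k j) => hkj'.
    have -> : (j.+1 == k) = false by apply/negbTE; lia.
    rewrite !exprS; ring.
  have -> : (j.+1 == k) = true by apply/eqP; lia.
  rewrite !exprS; ring.
rewrite bin_small ?ltnS // mul0r mul0r add0r.
case: (leqP k j) => hkj'.
  have -> : (j.+1 == k) = false by apply/negbTE; lia.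
  rewrite exprS; ring.
have -> : (j.+1 == k) = true by apply/eqP; lia.
rewrite !exprS; ring.
Qed.

Lemma delta_sum (c : nat -> R) n :
  \sum_(0 <= j < n) (if j.+1 == k then c j else 0) = if (k <= n)%N then c k.-1 else 0.
Proof.
elim: n => [|n IH]; first by rewrite big_geq //; case: k hk.
rewrite big_nat_recr //= IH.
case: (leqP k n) => h1; case: (leqP k n.+1) => h2; case: eqP => h3; try lia.
- by rewrite addr0.
- by rewrite add0r -h3.
- by rewrite addr0.
Qed.

Lemma F0 x n : F x n 0 = 0.
Proof. by rewrite /F; case: k hk. Qed.

Lemma Fbig x n : F x n n.+1 = 0.
Proof. by rewrite /F bin_small // !mul0r; case: ifP. Qed.

Lemma T_shift x n : \sum_(0 <= j < n.+1) F x n j.+1 = T x n.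
Proof.
by rewrite /T [RHS]big_nat_recl // F0 add0r [LHS]big_nat_recr //= Fbig addr0.
Qed.

Lemma Trec x n : T x n.+1 = T x n +
  (if (k <= n.+1)%N then 'C(n,k.-1)%:R * x ^+ k * (1-x) ^+ (n.+1-k) else 0).
Proof.
rewrite {1}/T big_nat_recl // F0 add0r.
under eq_bigr => j _ do rewrite Fstep.
rewrite !big_split /= -!mulr_sumr T_shift -/(T x n) delta_sum.
case: ifP => h.
  rewrite prednK //; have -> : (n - k.-1 = n.+1 - k)%N by lia.
  ring.
ring.
Qed.

Lemma TG x n : T x n = x ^+ k * G x n.
Proof.
elim: n => [|n IH].
  by rewrite /T /G !big_nat1 F0 /Gf; case: k hk => // ? _; rewrite mulr0.
rewrite Trec IH /G [in RHS]big_nat_recr //= /Gf /=.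
case: ifP => _; ring.
Qed.

Lemma G_anti p q n : 0 <= p -> p <= q -> q <= 1 -> G q n <= G p n.
Proof.
move=> p0 pq q1; apply: ler_sum => j _; rewrite /Gf; case: ifP => // _.
apply: ler_wpM2l; first exact: ler0n.
apply: lerXn2r; rewrite ?nnegrE; lra.
Qed.

Lemma G_ge0 p n : p <= 1 -> 0 <= G p n.
Proof.
move=> p1; apply: sumr_ge0 => j _; rewrite /Gf; case: ifP => // _.
apply: mulr_ge0; first exact: ler0n.
apply: exprn_ge0; lra.
Qed.

End Tail.

Section Main.
Variable R : realType.

Lemma sumT (k : nat) (x : R) n :
  \sum_(j < n.+1 | (k <= j)%N) 'C(n, j)%:R * x ^+ j * (1 - x) ^+ (n - j) = T R k x n.
Proof. by rewrite /T big_mkord big_mkcond. Qed.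

Lemma sum_le1 (P : pred nat) (x : R) n : 0 <= x -> x <= 1 ->
  \sum_(j < n.+1 | P j) 'C(n, j)%:R * x ^+ j * (1 - x) ^+ (n - j) <= 1.
Proof.
move=> x0 x1.
apply: (@le_trans _ _ (\sum_(j < n.+1) 'C(n, j)%:R * x ^+ j * (1 - x) ^+ (n - j))).
  rewrite big_mkcond /=; apply: ler_sum => j _; case: ifP => // _.
  apply: mulr_ge0; [apply: mulr_ge0; [exact: ler0n| exact: exprn_ge0] | apply: exprn_ge0; lra].
have E := exprDn (1 - x) x n; rewrite subrK expr1n in E.
rewrite le_eqVlt; apply/orP; left; apply/eqP; rewrite [RHS]E; apply: eq_bigr => j _; rewrite -mulr_natl; ring.
Qed.

Lemma exprk_le (x : R) k : (1 <= k)%N -> 0 <= x -> x <= 1 -> x ^+ k <= x.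
Proof. by case: k => // k' _ x0 x1; rewrite exprS ler_piMr // exprn_ile1. Qed.

End Main.

Theorem lemma10 (R : realType) (n k : nat) (p1 p2 : R) :
  (1 <= k)%N -> 0 <= p1 -> 0 <= p2 -> p1 + p2 = 1 ->
  Pr_load2_ge n (dist2 (1 - knorm k p1 p2) (knorm k p1 p2)) k
    <= Pr_maxload_ge n (dist2 p1 p2) k.
Proof.
move=> hk p10 p20 hp.
set q := knorm k p1 p2.
have p11 : p1 <= 1 by lra.
have p21 : p2 <= 1 by lra.
set s := p1 ^+ k + p2 ^+ k.
have s0 : 0 <= s by rewrite /s; apply: addr_ge0; apply: exprn_ge0.
have pk1 : p1 ^+ k <= p1.
  exact: exprk_le.
have pk2 : p2 ^+ k <= p2.
  exact: exprk_le.
have q0 : 0 <= q by apply: powR_ge0.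
have qk : q ^+ k = s.
  rewrite -powR_mulrn // /q /knorm -powRrM mulVf ?powRr1 //.
  by rewrite pnatr_eq0 -lt0n.
have q1 : q <= 1.
  by rewrite -(expr_le1 hk q0) qk /s; lra.
have p1q : p1 <= q.
  rewrite -(ler_pXn2r hk) ?nnegrE // qk /s; have := exprn_ge0 k p20; lra.
have p2q : p2 <= q.
  rewrite -(ler_pXn2r hk) ?nnegrE // qk /s; have := exprn_ge0 k p10; lra.
rewrite /Pr_load2_ge (sum_load _ _ _ _ (fun j => (k <= j)%N)) sumT.
rewrite /Pr_maxload_ge /max_load.
under eq_bigl => f do rewrite load0.
rewrite (sum_load _ _ _ _ (fun j => (k <= maxn (n - j) j)%N)) /=.
case: (leqP k.*2 n.+1) => hn; rewrite -muln2 in hn.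
  rewrite -sumT; apply: le_trans (sum_le1 _ _ q n q0 q1) _.
  rewrite (eq_bigl (fun _ => true)); last first.
    move=> j /=; rewrite leq_max; have := ltn_ord j; lia.
  have E := exprDn p1 p2 n. rewrite hp expr1n in E.
  rewrite le_eqVlt; apply/orP; left; apply/eqP; rewrite [LHS]E. apply: eq_bigr => j _.
  by rewrite -mulrA mulr_natl [p2 ^+ j * _]mulrC.
rewrite big_mkcond /=.
have hsplit : forall j : 'I_n.+1,
   (if (k <= maxn (n - j) j)%N then 'C(n, j)%:R * p2 ^+ j * p1 ^+ (n - j) else 0) =
   (if (k <= j)%N then 'C(n, j)%:R * p2 ^+ j * p1 ^+ (n - j) else 0) +
   (if (k <= n - j)%N then 'C(n, j)%:R * p2 ^+ j * p1 ^+ (n - j) else 0).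
  move=> j; rewrite leq_max.
  case: (leqP k j) => h1; case: (leqP k (n - j)) => h2 /=; rewrite ?addr0 ?add0r //.
  have := ltn_ord j; lia.
rewrite (eq_bigr _ (fun j _ => hsplit j)) big_split /=.
have e1 : 1 - p2 = p1 by lra.
have e2 : 1 - p1 = p2 by lra.
have -> : \sum_(i < n.+1)
     (if (k <= i)%N then 'C(n, i)%:R * p2 ^+ i * p1 ^+ (n - i) else 0) = T R k p2 n.
  by rewrite /T /F big_mkord e1.
have -> : \sum_(i < n.+1)
     (if (k <= n - i)%N then 'C(n, i)%:R * p2 ^+ i * p1 ^+ (n - i) else 0) = T R k p1 n.
  rewrite /T /F big_mkord e2 (reindex_inj rev_ord_inj) /=.
  apply: eq_bigr => j _; have hj := ltn_ord j; rewrite ltnS in hj.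
  rewrite subSS subKn // bin_sub //; case: ifP => // _; by rewrite mulrAC.
rewrite !(TG R k hk) qk /s mulrDl addrC.
apply: lerD; apply: ler_wpM2l; try exact: exprn_ge0; exact: G_anti.
Qed.
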